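(* Let $(X,r)$ be a finite simple solution of the YBE such that $|X|$ is not prime, and let $\mathcal G=\mathcal G(X,r)$ with its natural left brace structure. Let $I$ be a minimal nonzero ideal of the left brace $\mathcal G$. Then $\mathcal G/I$ is a trivial left brace whose additive group is cyclic, and $$I=\mathcal G^2=\langle \sigma_x-\sigma_y \mid x,y\in X\rangle_+ .$$ Moreover $\mathrm{soc}(\mathcal G)=\{0\}$.
   Context: A solution of the YBE is a pair $(X,r)$, $X$ nonempty, $r:X\times X\to X\times X$, $r(x,y)=(\sigma_x(y),\gamma_y(x))$, with $r^2=\mathrm{id}$, all $\sigma_x,\gamma_x$ bijective, and $r_{12}r_{23}r_{12}=r_{23}r_{12}r_{23}$ on $X^3$ ($r_{12}=r\times \mathrm{id}$, $r_{23}=\mathrm{id}\times r$). $\mathcal G(X,r)=\langle\sigma_x:x\in X\rangle\le\mathrm{Sym}_X$. Homomorphisms of solutions are maps $f$ with $f(\sigma_x(y))=\sigma'_{f(x)}(f(y))$; $(X,r)$ is simple if $|X|>1$ and every surjective homomorphism of solutions from $(X,r)$ is bijective or has one-point image. A left brace is a set $B$ with operations $+$ and $\circ$ (written $ab=a\circ b$) such that $(B,+)$ is an abelian group, $(B,\circ)$ is a group and $a(b+c)+a=ab+ac$ for all $a,b,c$; the neutral elements coincide (denoted $0$). Its lambda map is $\lambda_a(b)=-a+ab$, giving a homomorphism $(B,\circ)\to\mathrm{Aut}(B,+)$. $B$ is trivial if $ab=a+b$ for all $a,b$. $\mathrm{soc}(B)=\{a: ab=a+b\ \forall b\}$. An ideal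 is a normal subgroup $I$ of $(B,\circ)$ with $\lambda_a(I)\subseteq I$ for all $a$; then $B/I$ is a left brace. $a*b=\lambda_a(b)-b$ and $B^2$ is the additive subgroup generated by all $a*b$. The structure group $G(X,r)$ (generators $X$, relations $xy=\sigma_x(y)\gamma_y(x)$) has a left brace structure with additive group free abelian on $X$ and $\lambda_x(y)=\sigma_x(y)$; the map $x\mapsto\sigma_x$ extends to a surjective group homomorphism $\phi:G(X,r)\to\mathcal G(X,r)$ with kernel $\mathrm{soc}(G(X,r))$, and the natural left brace structure on $\mathcal G(X,r)$ is the unique one making $\phi$ a homomorphism of left braces. *)

(* Defs.v *)
From HB Require Import structures.
From mathcomp Require Import all_boot all_fingroup.

Set Implicit Arguments.
Unset Strict Implicit.
Unset Printing Implicit Defensive.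

(* r(x,y) = (sigma_x(y), gamma_y(x)) *)
Definition ybe_r (X : Type) (s g : X -> X -> X) (p : X * X) : X * X :=
  (s p.1 p.2, g p.2 p.1).

Definition ybe_r12 (X : Type) (r : X * X -> X * X) (t : X * X * X) : X * X * X :=
  let p := r (t.1.1, t.1.2) in (p.1, p.2, t.2).

Definition ybe_r23 (X : Type) (r : X * X -> X * X) (t : X * X * X) : X * X * X :=
  let p := r (t.1.2, t.2) in (t.1.1, p.1, p.2).

Definition is_solution (X : Type) (s g : X -> X -> X) : Prop :=
  inhabited X /\
  (forall x, bijective (s x)) /\ (forall x, bijective (g x)) /\
  (forall p, ybe_r s g (ybe_r s g p) = p) /\
  (forall t, ybe_r12 (ybe_r s g) (ybe_r23 (ybe_r s g) (ybe_r12 (ybe_r s g) t))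
           = ybe_r23 (ybe_r s g) (ybe_r12 (ybe_r s g) (ybe_r23 (ybe_r s g) t))).

Definition sol_hom (X Y : Type) (sX : X -> X -> X) (sY : Y -> Y -> Y) (f : X -> Y) :=
  forall x y, f (sX x y) = sY (f x) (f y).

Definition simple_solution (X : finType) (s g : X -> X -> X) : Prop :=
  is_solution s g /\ 1 < #|X| /\
  forall (Y : Type) (sY gY : Y -> Y -> Y) (f : X -> Y),
    is_solution sY gY -> sol_hom s sY f -> (forall y, exists x, f x = y) ->
    (injective f \/ (forall x y, f x = f y)).

Definition permGroup (X : finType) (s : X -> {perm X}) : {group {perm X}} :=
  <<[set s x | x : X]>>%G.

Section Braces.
Variable gT : finGroupType.

(* the brace multiplication a o b is composition "apply b then a"; in
   MathComp, (p * q) x = q (p x) for permutations, hence the swap. *)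
Definition bcomp (a b : gT) : gT := (b * a)%g.

Variables (add : gT -> gT -> gT) (opp : gT -> gT).

Definition left_brace_on (G : {set gT}) : Prop :=
  {in G &, forall a b, add a b \in G} /\
  {in G, forall a, opp a \in G} /\
  {in G & &, forall a b c, add a (add b c) = add (add a b) c} /\
  {in G &, forall a b, add a b = add b a} /\
  {in G, forall a, add 1%g a = a} /\
  {in G, forall a, add (opp a) a = 1%g} /\
  {in G & &, forall a b c, add (bcomp a (add b c)) a = add (bcomp a b) (bcomp a c)}.

Definition blambda (a b : gT) : gT := add (opp a) (bcomp a b).

Definition bstar (a b : gT) : gT := add (blambda a b) (opp b).

Definition is_ideal (G I : {set gT}) : Prop :=
  group_set I /\ (I <| G)%g /\ {in G & I, forall a x, blambda a x \in I}.

Definition minimal_nonzero_ideal (G I : {set gT}) : Prop :=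
  is_ideal G I /\ I != [1 gT]%g /\
  forall J : {set gT}, is_ideal G J -> J \subset I -> J = [1 gT]%g \/ J = I.

Definition in_add_span (S : {set gT}) (x : gT) : Prop :=
  forall A : {set gT}, 1%g \in A -> {in A &, forall a b, add a b \in A} ->
    {in A, forall a, opp a \in A} -> S \subset A -> x \in A.

Definition bnmul (n : nat) (a : gT) : gT := iter n (add a) 1%g.

End Braces.

(* The natural left brace structure on G(X,r): the brace structure
   (G, add, o) for which lambda_{sigma_x}(sigma_y) = sigma_{sigma_x(y)},
   i.e. the one making x |-> sigma_x extend to a brace homomorphism from
   the structure group (where lambda_x(y) = sigma_x(y)). *)
Definition natural_brace (X : finType) (s : X -> {perm X})
    (add : {perm X} -> {perm X} -> {perm X}) (opp : {perm X} -> {perm X}) : Prop :=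
  left_brace_on add opp (permGroup s) /\
  forall x y, blambda add opp (s x) (s y) = s (s x y).

(* Main.v *)
Require Import Defs.
From HB Require Import structures.
From mathcomp Require Import all_boot all_fingroup all_solvable.
From Stdlib Require Import ClassicalDescription.

Set Implicit Arguments.
Unset Strict Implicit.
Unset Printing Implicit Defensive.
Open Scope group_scope.


Create HintDb bmem.

Section Brace.
Variables (gT : finGroupType) (G : {group gT}) (add : gT -> gT -> gT) (opp : gT -> gT).
Hypothesis HB : left_brace_on add opp G.

Local Notation lam := (blambda add opp).
Local Notation star := (bstar add opp).

Lemma addG a b : a \in G -> b \in G -> add a b \in G.
Proof. by case: HB => H _; apply: H. Qed.
Lemma oppG a : a \in G -> opp a \in G.
Proof. by case: HB => _ [H _]; apply: H. Qed.
Lemma addA a b c : a \in G -> b \in G -> c \in G -> add a (add b c) = add (add a b) c.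
Proof. by case: HB => _ [_ [H _]]; apply: H. Qed.
Lemma addC a b : a \in G -> b \in G -> add a b = add b a.
Proof. by case: HB => _ [_ [_ [H _]]]; apply: H. Qed.
Lemma add1 a : a \in G -> add 1 a = a.
Proof. by case: HB => _ [_ [_ [_ [H _]]]]; apply: H. Qed.
Lemma addNa a : a \in G -> add (opp a) a = 1.
Proof. by case: HB => _ [_ [_ [_ [_ [H _]]]]]; apply: H. Qed.
Lemma compat a b c : a \in G -> b \in G -> c \in G ->
  add (bcomp a (add b c)) a = add (bcomp a b) (bcomp a c).
Proof. by case: HB => _ [_ [_ [_ [_ [_ H]]]]]; apply: H. Qed.
Lemma bcompG a b : a \in G -> b \in G -> bcomp a b \in G.
Proof. by move=> ha hb; rewrite /bcomp groupM. Qed.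
Lemma invG' a : a \in G -> a^-1 \in G.
Proof. by rewrite groupV. Qed.
Lemma oneG : (1 : gT) \in G. Proof. exact: group1. Qed.
Lemma lamG a b : a \in G -> b \in G -> lam a b \in G.
Proof. by move=> ha hb; rewrite /blambda addG ?oppG ?bcompG. Qed.
Lemma starG a b : a \in G -> b \in G -> star a b \in G.
Proof. by move=> ha hb; rewrite /bstar addG ?oppG ?lamG. Qed.

Hint Resolve addG oppG bcompG invG' oneG lamG starG : bmem.
Ltac bm := match goal with |- is_true (_ \in _) => solve [auto 15 with bmem] end.

Lemma addr1 a : a \in G -> add a 1 = a.
Proof. move=> ha; rewrite addC; try bm. by rewrite add1. Qed.
Lemma addaN a : a \in G -> add a (opp a) = 1.
Proof. move=> ha; rewrite addC; try bm. by rewrite addNa. Qed.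
Lemma addKl a b : a \in G -> b \in G -> add (opp a) (add a b) = b.
Proof. move=> ha hb; rewrite addA; try bm. by rewrite addNa // add1. Qed.
Lemma addNK a b : a \in G -> b \in G -> add a (add (opp a) b) = b.
Proof. move=> ha hb; rewrite addA; try bm. by rewrite addaN // add1. Qed.
Lemma addrK a b : a \in G -> b \in G -> add (add a b) (opp b) = a.
Proof. move=> ha hb; rewrite -addA; try bm. by rewrite addaN // addr1. Qed.
Lemma addrNK a b : a \in G -> b \in G -> add (add a (opp b)) b = a.
Proof. move=> ha hb; rewrite -addA; try bm. by rewrite addNa // addr1. Qed.
Lemma addIl a b c : a \in G -> b \in G -> c \in G -> add a b = add a c -> b = c.
Proof. by move=> ha hb hc e; rewrite -(addKl ha hb) e addKl. Qed.
Lemma opp_uniq a b : a \in G -> b \in G -> add a b = 1 -> b = opp a.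
Proof. by move=> ha hb e; rewrite -(addKl ha hb) e addr1 //; bm. Qed.
Lemma opp1 : opp 1 = 1.
Proof. by symmetry; apply: opp_uniq; rewrite ?add1 //; bm. Qed.
Lemma oppK a : a \in G -> opp (opp a) = a.
Proof. by move=> ha; symmetry; apply: opp_uniq; try bm; rewrite addNa. Qed.
Lemma addCA a b c : a \in G -> b \in G -> c \in G -> add a (add b c) = add b (add a c).
Proof.
move=> ha hb hc; rewrite addA; try bm. rewrite (addC ha hb) -addA //.
Qed.
Lemma addAC a b c : a \in G -> b \in G -> c \in G -> add (add a b) c = add (add a c) b.
Proof.
move=> ha hb hc; rewrite -addA; try bm. rewrite (addC hb hc) addA //.
Qed.
Lemma addACA a b c d : a \in G -> b \in G -> c \in G -> d \in G ->
  add (add a b) (add c d) = add (add a c) (add b d).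
Proof.
move=> ha hb hc hd; rewrite -addA; try bm. rewrite (addCA hb hc hd) addA //; bm.
Qed.
Lemma oppD a b : a \in G -> b \in G -> opp (add a b) = add (opp a) (opp b).
Proof.
move=> ha hb; symmetry; apply: opp_uniq; try bm.
rewrite addACA; try bm. by rewrite !addaN // add1 //; bm.
Qed.
Lemma subr1 a b : a \in G -> b \in G -> add a (opp b) = 1 -> a = b.
Proof.
move=> ha hb e; have := opp_uniq ha (oppG hb) e => e2.
by rewrite -(oppK ha) -e2 oppK.
Qed.

Lemma compD a b c : a \in G -> b \in G -> c \in G ->
  bcomp a (add b c) = add (add (bcomp a b) (bcomp a c)) (opp a).
Proof. by move=> ha hb hc; rewrite -compat // addrK //; bm. Qed.

Lemma compE a b : a \in G -> b \in G -> bcomp a b = add a (lam a b).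
Proof. by move=> ha hb; rewrite /blambda addNK //; bm. Qed.
Lemma lam1 a : a \in G -> lam a 1 = 1.
Proof. by move=> ha; rewrite /blambda /bcomp mul1g addNa. Qed.
Lemma lam1l b : b \in G -> lam 1 b = b.
Proof. by move=> hb; rewrite /blambda /bcomp mulg1 opp1 add1. Qed.
Lemma lamD a b c : a \in G -> b \in G -> c \in G ->
  lam a (add b c) = add (lam a b) (lam a c).
Proof.
move=> ha hb hc; rewrite /blambda compD // addACA; try bm.
rewrite (addC _ (oppG ha)); try bm. rewrite addA //; bm.
Qed.
Lemma lamN a b : a \in G -> b \in G -> lam a (opp b) = opp (lam a b).
Proof.
move=> ha hb; apply: opp_uniq; try bm.
by rewrite -lamD ?addaN ?lam1 //; bm.
Qed.
Lemma lamM a b c : a \in G -> b \in G -> c \in G ->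
  lam (bcomp a b) c = lam a (lam b c).
Proof.
move=> ha hb hc; rewrite [lam b c]/blambda lamD; try bm.
rewrite lamN // [lam a b]/blambda oppD; try bm. rewrite oppK; try bm.
rewrite /blambda.
have -> : bcomp a (bcomp b c) = bcomp (bcomp a b) c by rewrite /bcomp mulgA.
rewrite addACA; try bm. by rewrite addaN // add1 //; bm.
Qed.
Lemma lamV a b : a \in G -> b \in G -> lam a^-1 (lam a b) = b.
Proof.
move=> ha hb; rewrite -lamM; try bm.
by rewrite /bcomp mulgV lam1l.
Qed.
Lemma lamVr a b : a \in G -> b \in G -> lam a (lam a^-1 b) = b.
Proof.
move=> ha hb; rewrite -lamM; try bm.
by rewrite /bcomp mulVg lam1l.
Qed.
Lemma lam_inj a b c : a \in G -> b \in G -> c \in G -> lam a b = lam a c -> b = c.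
Proof. by move=> ha hb hc e; rewrite -(lamV ha hb) e lamV. Qed.

Lemma starM a x y : a \in G -> x \in G -> y \in G ->
  star a (bcomp x y) = add (add (star a x) (star (bcomp a x) y)) (opp (star x y)).
Proof.
move=> ha hx hy; rewrite /bstar (compE hx hy) lamD; try bm.
rewrite lamM // oppD; try bm. rewrite addACA; try bm.
rewrite oppD; try bm. rewrite oppK //.
rewrite -[RHS]addA; try bm.
congr add. rewrite addACA; try bm. by rewrite addNa // addr1 //; bm.
Qed.

Section Ideal.
Variable J : {set gT}.
Hypothesis HJ : is_ideal add opp G J.

Lemma idealG j : j \in J -> j \in G.
Proof. by case: HJ => _ [/andP [sJG _] _] hj; apply: (subsetP sJG). Qed.
Lemma ideal1 : (1 : gT) \in J.
Proof. by case: HJ => /andP [h _] _. Qed.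
Lemma idealM j k : j \in J -> k \in J -> j * k \in J.
Proof. by case: HJ => gs _; exact: (@groupM _ (Group gs)). Qed.
Lemma idealV j : j \in J -> j^-1 \in J.
Proof. by case: HJ => gs _; move=> hj; rewrite (@groupV _ (Group gs)). Qed.
Lemma ideal_lam a j : a \in G -> j \in J -> lam a j \in J.
Proof. by case: HJ => _ [_ H]; apply: H. Qed.
Lemma ideal_conj j b : j \in J -> b \in G -> j ^ b \in J.
Proof.
case: HJ => _ [/andP [_ sGN] _] hj hb.
by rewrite memJ_norm // (subsetP sGN).
Qed.
Lemma ideal_opp j : j \in J -> opp j \in J.
Proof.
move=> hj; have hjG := idealG hj.
have -> : opp j = lam j j^-1 by rewrite /blambda /bcomp mulVg addr1 //; bm.
by rewrite ideal_lam // idealV.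
Qed.
Lemma ideal_add j k : j \in J -> k \in J -> add j k \in J.
Proof.
move=> hj hk; have hjG := idealG hj; have hkG := idealG hk.
have -> : add j k = bcomp j (lam j^-1 k) by rewrite compE ?lamVr //; bm.
by rewrite /bcomp idealM // ideal_lam ?invG'.
Qed.

Definition cong a b := add a (opp b) \in J.

Lemma cong_refl a : a \in G -> cong a a.
Proof. by move=> ha; rewrite /cong addaN // ideal1. Qed.
Lemma cong_sym a b : a \in G -> b \in G -> cong a b -> cong b a.
Proof.
move=> ha hb h; have := ideal_opp h.
rewrite oppD; try bm. rewrite oppK; try bm. by rewrite addC; try bm.
Qed.
Lemma cong_trans a b c : a \in G -> b \in G -> c \in G -> cong a b -> cong b c -> cong a c.
Proof.
move=> ha hb hc h1 h2; have := ideal_add h1 h2.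
by rewrite -addA ?addKl //; bm.
Qed.
Lemma cong_lamr a b b' : a \in G -> b \in G -> b' \in G -> cong b b' ->
  cong (lam a b) (lam a b').
Proof. by move=> ha hb hb' h; rewrite /cong -lamN // -lamD ?ideal_lam //; bm. Qed.

Lemma cong_bcomp a b : a \in G -> b \in G -> cong a b ->
  exists2 j, j \in J & a = bcomp b j.
Proof.
move=> ha hb h; exists (lam b^-1 (add a (opp b))); first by rewrite ideal_lam ?invG'.
rewrite compE; try bm. rewrite lamVr; try bm. rewrite addCA; try bm.
by rewrite addaN // addr1.
Qed.

Lemma lam_j_cong j b : j \in J -> b \in G -> cong (lam j b) b.
Proof.
move=> hj hb; have hjG := idealG hj.
have hj' : j ^ b^-1 \in J by rewrite ideal_conj ?invG'.
have hj'G := idealG hj'.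
have e : bcomp j b = bcomp b (j ^ b^-1).
  by rewrite /bcomp conjgE invgK !mulgA mulgKV.
rewrite /cong /blambda e compE //.
rewrite -addA; try bm. rewrite (addC hb) ?addrK; try bm.
by rewrite ideal_add ?ideal_opp ?ideal_lam.
Qed.

Lemma cong_laml a a' b : a \in G -> a' \in G -> b \in G -> cong a' a ->
  cong (lam a' b) (lam a b).
Proof.
move=> ha ha' hb h; have [j hj ->] := cong_bcomp ha' ha h.
have hjG := idealG hj.
by rewrite lamM // cong_lamr ?lam_j_cong //; bm.
Qed.

Lemma cong_lam a a' b b' : a \in G -> a' \in G -> b \in G -> b' \in G ->
  cong a a' -> cong b b' -> cong (lam a b) (lam a' b').
Proof.
move=> ha ha' hb hb' h1 h2.
apply: (@cong_trans _ (lam a b')); try bm; first exact: cong_lamr.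
by apply: cong_laml => //; apply: cong_sym.
Qed.

Lemma cong_lam_cancel a b b' : a \in G -> b \in G -> b' \in G ->
  cong (lam a b) (lam a b') -> cong b b'.
Proof.
move=> ha hb hb' h; have := cong_lamr (invG' ha) _ _ h.
by rewrite !lamV //; apply; bm.
Qed.

Lemma cong_coset a b : a \in G -> b \in G -> cong a b -> J :* a = J :* b.
Proof.
move=> ha hb h; have [j hj ->] := cong_bcomp ha hb h.
case: HJ => gs _.
by rewrite /bcomp rcosetM (@rcoset_id _ (Group gs)).
Qed.

End Ideal.

Lemma span_ideal (L : {set gT}) :
  L \subset G -> (1 : gT) \in L ->
  {in L &, forall a b, add a b \in L} -> {in L, forall a, opp a \in L} ->
  {in G & L, forall a x, lam a x \in L} ->
  {in G &, forall a b, star a b \in L} -> is_ideal add opp G L.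
Proof.
move=> sLG h1 hadd hopp hlam hstar.
have inG : forall x, x \in L -> x \in G by move=> x; apply: (subsetP sLG).
have gs : group_set L.
  apply/andP; split=> //; apply/subsetP => _ /mulsgP [j k hj hk ->].
  have -> : j * k = bcomp k j by [].
  by rewrite compE ?inG // hadd // hlam ?inG.
split=> //; split=> //; apply/andP; split=> //.
apply/normsP => c hc; apply/eqP; rewrite eqEcard cardJg leqnn andbT.
apply/subsetP => _ /imsetP [k hk ->].
have hkG := inG _ hk.
set w := k ^ c.
have hw : w \in G by rewrite /w groupJ.
have e : add w (lam w c) = add c (lam c k).
  by rewrite -!compE // /bcomp /w conjgE !mulgA mulgV mul1g.
have -> : w = add (lam c k) (opp (star w c)).
  apply: (@addIl (lam w c)); try bm.
  rewrite /bstar oppD ?oppK; try bm.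
  rewrite addCA; try bm. rewrite addNK; try bm.
  rewrite addC; try bm. by rewrite e addC; try bm.
by rewrite hadd ?hopp ?hstar ?hlam.
Qed.

End Brace.



Lemma surj_bij_fin (T : finType) (f : T -> T) :
  (forall y, exists x, f x = y) -> bijective f.
Proof.
move=> hs; pose h y := odflt y [pick x | f x == y].
have hK : cancel h f.
  move=> y; rewrite /h; case: pickP => [x /eqP //|n].
  by have [x hx] := hs y; have := n x; rewrite hx eqxx.
have [h' hh' hh'K] := injF_bij (can_inj hK).
have fE x : f x = h' x by rewrite -{1}(hh'K x) hK.
by exists h => // x; rewrite fE hh'K.
Qed.

Lemma quot_dich (X : finType) (s g : X -> X -> X) (R : rel X) :
  simple_solution s g ->
  (forall x, R x x) -> (forall x y, R x y -> R y x) ->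
  (forall x y z, R x y -> R y z -> R x z) ->
  (forall x x' y y', R x x' -> R y y' -> R (s x y) (s x' y')) ->
  (forall x x' y y', R x x' -> R y y' -> R (g x y) (g x' y')) ->
  (forall x y, R x y -> x = y) \/ (forall x y, R x y).
Proof.
move=> [Hsol [_ Hsimp]] Rr Rs Rt Cs Cg.
pose rep x := odflt x [pick z | R x z].
have repR x : R x (rep x).
  by rewrite /rep; case: pickP => [z //|n] /=.
have rep_eq x y : R x y -> rep x = rep y.
  move=> hxy; rewrite /rep.
  have -> : [pick z | R x z] = [pick z | R y z].
    apply: eq_pick => z; apply/idP/idP => h.
      exact: Rt (Rs _ _ hxy) h.
    exact: Rt hxy h.
  by case: pickP => [z //|n] /=; have := n y; rewrite Rr.
have rep_rep x : rep (rep x) = rep x by symmetry; apply: rep_eq; apply: repR.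
pose Y := {x : X | rep x == x}.
pose f (x : X) : Y := exist _ (rep x) (introT eqP (rep_rep x)).
have fR x y : R x y -> f x = f y by move=> h; apply: val_inj => /=; apply: rep_eq.
have fval (y : Y) : f (val y) = y by apply: val_inj => /=; apply/eqP; apply: (valP y).
have Rrep x : R (rep x) x by apply: Rs; apply: repR.
pose sY (a b : Y) := f (s (val a) (val b)).
pose gY (a b : Y) := f (g (val a) (val b)).
have fs x y : f (s x y) = sY (f x) (f y) by apply: fR; apply: Cs; apply: repR.
have fg x y : f (g x y) = gY (f x) (f y) by apply: fR; apply: Cg; apply: repR.
have hr x y : ybe_r sY gY (f x, f y) = (f (ybe_r s g (x, y)).1, f (ybe_r s g (x, y)).2).
  by rewrite /ybe_r /= fs fg.
pose ft (q : X * X * X) := (f q.1.1, f q.1.2, f q.2).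
have h12 q : ybe_r12 (ybe_r sY gY) (ft q) = ft (ybe_r12 (ybe_r s g) q).
  by rewrite /ybe_r12 /ft /= fs fg.
have h23 q : ybe_r23 (ybe_r sY gY) (ft q) = ft (ybe_r23 (ybe_r s g) q).
  by rewrite /ybe_r23 /ft /= fs fg.
case: Hsol => [[x0] [Hbs [Hbg [Hinv Hybe]]]].
have solY : is_solution sY gY.
  split; first exact: (inhabits (f x0)).
  split.
    move=> a; apply: surj_bij_fin => z.
    have [h _ hK] := Hbs (val a).
    exists (f (h (val z))); rewrite /sY /= -[X in _ = X](fval z); apply: fR.
    by have := Cs _ _ _ _ (Rr (val a)) (Rrep (h (val z))); rewrite hK.
  split.
    move=> a; apply: surj_bij_fin => z.
    have [h _ hK] := Hbg (val a).
    exists (f (h (val z))); rewrite /gY /= -[X in _ = X](fval z); apply: fR.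
    by have := Cg _ _ _ _ (Rr (val a)) (Rrep (h (val z))); rewrite hK.
  split.
    move=> [a b]; rewrite -(fval a) -(fval b).
    rewrite hr.
    have -> : ybe_r s g (val a, val b) = ((ybe_r s g (val a, val b)).1, (ybe_r s g (val a, val b)).2) by [].
    by rewrite hr -surjective_pairing Hinv.
  move=> [[a b] c]; rewrite -(fval a) -(fval b) -(fval c).
  have -> : (f (val a), f (val b), f (val c)) = ft (val a, val b, val c) by [].
  by rewrite h12 h23 h12 Hybe h23 h12 h23.
have hom : sol_hom s sY f by move=> x y; apply: fs.
have surj : forall y, exists x, f x = y by move=> y; exists (val y); apply: fval.
case: (Hsimp Y sY gY f solY hom surj) => [inj|cst]; [left|right].
  by move=> x y h; apply: inj; apply: fR.
move=> x y; have := congr1 val (cst x y) => /= e.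
by apply: Rt (repR x) _; rewrite e; apply: Rrep.
Qed.



Lemma cyc_comm (T : finType) (p a c : {perm T}) :
  a \in <[p]> -> c \in <[p]> -> commute a c.
Proof. by case/cycleP=> i -> /cycleP [j ->]; apply: commuteX2. Qed.

Lemma const_contra (X : finType) (s g : X -> {perm X}) :
  simple_solution (fun x y => s x y) (fun x y => g x y) -> ~~ prime #|X| ->
  (forall x y, s x = s y) -> False.
Proof.
move=> Hs Hnp hc.
have Hs' := Hs; case: Hs' => [[[x0] [_ [_ [Hinv _]]]] [H1 _]].
set p := s x0.
have hs x : s x = p by apply: hc.
have hg a b : g a b = p^-1 b.
  have := congr1 fst (Hinv (b, a)); rewrite /ybe_r /= !hs => e.
  by rewrite -{2}e permK.
have dq (q : {perm X}) : q \in <[p]> ->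
    (forall x, q x = x) \/ (forall x y, exists2 a, a \in <[q]> & a x = y).
  move=> hq.
  have sq : <[q]> \subset <[p]> by rewrite cycle_subG.
  pose R := fun x y => [exists a in <[q]>, a x == y].
  have RP x y : reflect (exists2 a, a \in <[q]> & a x = y) (R x y).
    by apply: (iffP existsP) => [[a /andP [ha /eqP e]]|[a ha e]]; exists a => //;
      rewrite ha e eqxx.
  have Rh h y y' : h \in <[p]> -> R y y' -> R (h y) (h y').
    move=> hh /RP [a ha <-]; apply/RP; exists a => //.
    have := cyc_comm hh (subsetP sq _ ha) => cm.
    by rewrite -!permM cm.
  case: (@quot_dich X (fun x y => s x y) (fun x y => g x y) R Hs).
  - by move=> x; apply/RP; exists 1 => //; rewrite perm1.
  - move=> x y /RP [a ha e]; apply/RP; exists a^-1; rewrite ?groupV //.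
    by rewrite -e permK.
  - move=> x y z /RP [a ha e1] /RP [b hb e2]; apply/RP; exists (a * b).
      by rewrite groupM.
    by rewrite permM e1 e2.
  - by move=> x x' y y' _ h; rewrite !hs; apply: Rh => //; apply: cycle_id.
  - by move=> x x' y y' _ h; rewrite !hg; apply: Rh => //; rewrite groupV cycle_id.
  - by move=> h; left=> x; symmetry; apply: h; apply/RP; exists q => //; apply: cycle_id.
  - by move=> h; right=> x y; apply/RP; apply: h.
have n2 : 2 < #|X|.
  rewrite ltn_neqAle H1 andbT; apply/negP => /eqP e.
  by move: Hnp; rewrite -e.
case: (dq p (cycle_id p)) => [hfix|htr].
  have p1 : p = 1 by apply/permP => x; rewrite hfix perm1.
  pose R := fun x y : X => (x == x0) == (y == x0).
  have : 1 < #|[set: X] :\ x0|.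
    have e := cardsD1 x0 [set: X]; rewrite in_setT cardsT add1n in e.
    by rewrite e ltnS in n2.
  case/card_gt1P => y [z [hy hz yz]].
  move: hy hz; rewrite !inE !andbT => hy hz.
  case: (@quot_dich X (fun x y => s x y) (fun x y => g x y) R Hs).
  - by move=> x; rewrite /R eqxx.
  - by move=> x y'; rewrite /R eq_sym.
  - by move=> a b c; rewrite /R => /eqP -> /eqP ->.
  - by move=> a a' b b' _ h; rewrite !hs p1 !perm1.
  - by move=> a a' b b' _ h; rewrite !hg p1 invg1 !perm1.
  - by move=> h; move/eqP: yz; apply; apply: h; rewrite /R (negbTE hy) (negbTE hz).
  - by move=> h; have := h x0 y; rewrite /R eqxx (negbTE hy).
set n := #|X|.
have npos : 0 < n by apply: leq_trans H1.
pose phi (a : {perm X}) := a x0.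
have phi_inj : {in <[p]> &, injective phi}.
  move=> a b ha hb e; apply/permP => y.
  have [c hcc <-] := htr x0 y.
  rewrite -!permM (cyc_comm hcc ha) (cyc_comm hcc hb) !permM.
  by rewrite /phi in e; rewrite e.
have cardp : #[p] = n.
  have im : [set phi a | a in <[p]>] = [set: X].
    apply/setP => y; rewrite in_setT; apply/imsetP.
    by have [c hcc <-] := htr x0 y; exists c.
  by rewrite /order -(card_in_imset phi_inj) im cardsT.
set r := pdiv n.
have pr : prime r by apply: pdiv_prime.
have rn : r %| n by apply: pdiv_dvd.
have rltn : r < n.
  rewrite ltn_neqAle dvdn_leq // andbT; apply/negP => /eqP e.
  by move: Hnp; rewrite -/n -e pr.
case: (dq (p ^+ r) (mem_cycle p r)) => [hfix|htr'].
  have : p ^+ r = 1 by apply/permP => x; rewrite hfix perm1.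
  move/eqP; rewrite -order_dvdn cardp => /dvdn_leq.
  by rewrite prime_gt0 // => /(_ isT); rewrite leqNgt rltn.
have : n <= #[p ^+ r].
  rewrite /order /n -cardsT.
  have -> : [set: X] = [set phi a | a in <[p ^+ r]>].
    apply/setP => y; rewrite in_setT; symmetry; apply/imsetP.
    by have [c hcc <-] := htr' x0 y; exists c.
  exact: leq_imset_card.
rewrite orderXdiv ?cardp // leqNgt ltn_Pdiv //.
exact: prime_gt1.
Qed.



Definition pdec (P : Prop) : bool := if excluded_middle_informative P then true else false.
Lemma pdecP (P : Prop) : reflect P (pdec P).
Proof. by rewrite /pdec; case: excluded_middle_informative => h; constructor. Qed.

Section Main.
Variables (X : finType) (s g : X -> {perm X})
  (add : {perm X} -> {perm X} -> {perm X}) (opp : {perm X} -> {perm X}).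
Hypothesis Hsimp : simple_solution (fun x y => s x y) (fun x y => g x y).
Hypothesis Hnat : natural_brace s add opp.

Local Notation G := (permGroup s).
Local Notation lam := (blambda add opp).
Local Notation star := (bstar add opp).

Lemma HB : left_brace_on add opp G. Proof. exact: Hnat.1. Qed.
Lemma Hlam x y : lam (s x) (s y) = s (s x y). Proof. exact: Hnat.2. Qed.

Lemma addGm (a b : {perm X}) : a \in G -> b \in G -> add a b \in G.
Proof. exact: (addG HB). Qed.
Lemma oppGm (a : {perm X}) : a \in G -> opp a \in G.
Proof. exact: (oppG HB). Qed.
Lemma lamGm (a b : {perm X}) : a \in G -> b \in G -> lam a b \in G.
Proof. exact: (lamG HB). Qed.
Lemma starGm (a b : {perm X}) : a \in G -> b \in G -> star a b \in G.
Proof. exact: (starG HB). Qed.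
Lemma bcompGm (a b : {perm X}) : a \in G -> b \in G -> bcomp a b \in G.
Proof. exact: bcompG. Qed.
Lemma invGm (a : {perm X}) : a \in G -> a^-1 \in G.
Proof. exact: invG'. Qed.
Lemma oneGm : (1 : {perm X}) \in G.
Proof. exact: group1. Qed.
Hint Resolve addGm oppGm bcompGm invGm oneGm lamGm starGm : bmem.
Ltac bm := match goal with |- is_true (_ \in _) => solve [auto 15 with bmem] end.

Lemma sG x : s x \in G.
Proof. by rewrite /permGroup mem_gen // imset_f. Qed.
Hint Resolve sG : bmem.

Lemma sg_inv x y : s (s x y) (g y x) = x.
Proof.
case: Hsimp => [[_ [_ [_ [Hinv _]]]] _].
exact: (congr1 fst (Hinv (x, y))).
Qed.

Lemma gen_ind (H : {set {perm X}}) : group_set H ->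
  (forall x, s x \in H) -> G \subset H.
Proof.
move=> gs hs; have -> : H = Group gs by [].
rewrite /permGroup gen_subG; apply/subsetP => _ /imsetP [y _ ->]; exact: hs.
Qed.

Lemma lam_s a x : a \in G -> lam a (s x) = s (a x).
Proof.
move=> ha.
pose H := [set b in G | [forall x, lam b (s x) == s (b x)]].
have gs : group_set H.
  apply/andP; split.
    rewrite inE group1 /=; apply/forallP => y.
    by rewrite (lam1l HB) ?perm1 //; bm.
  apply/subsetP => _ /mulsgP [b c hb hc ->].
  move: hb hc; rewrite !inE => /andP [hb /forallP fb] /andP [hc /forallP fc].
  rewrite groupM //=; apply/forallP => y.
  have -> : b * c = bcomp c b by [].
  by rewrite (lamM HB) //; try bm; rewrite (eqP (fb y)) (eqP (fc (b y))) permM.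
have : a \in H.
  apply: (subsetP (gen_ind gs _)) => // y.
  by rewrite inE sG /=; apply/forallP => z; rewrite Hlam.
by rewrite inE => /andP [_ /forallP /(_ x) /eqP].
Qed.

Lemma s_inj_or_const : (forall x y, s x = s y -> x = y) \/ (forall x y, s x = s y).
Proof.
pose R := fun x y => s x == s y.
case: (@quot_dich X (fun x y => s x y) (fun x y => g x y) R Hsimp).
- by move=> x; rewrite /R.
- by move=> x y; rewrite /R eq_sym.
- by move=> x y z; rewrite /R => /eqP -> /eqP ->.
- by move=> x x' y y'; rewrite /R => /eqP h1 /eqP h2; rewrite -!Hlam h1 h2.
- move=> x x' y y'; rewrite /R => /eqP h1 /eqP h2; apply/eqP.
  have e1 := sg_inv y x; have e2 := sg_inv y' x'.
  have ec : s (s y x) = s (s y' x') by rewrite -!Hlam h1 h2.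
  apply: (@lam_inj _ _ _ _ HB (s (s y x))); try bm.
  by rewrite !lam_s; try bm; rewrite e1 ec e2 h2.
- by move=> h; left=> x y e; apply: h; rewrite /R e.
- by move=> h; right=> x y; apply/eqP; apply: h.
Qed.

Hypothesis Hnp : ~~ prime #|X|.
Variable I : {set {perm X}}.
Hypothesis Hmin : minimal_nonzero_ideal add opp G I.

Lemma s_inj x y : s x = s y -> x = y.
Proof. by case: s_inj_or_const => [h|h]; [apply: h | case: (const_contra Hsimp Hnp h)]. Qed.

Lemma HI : is_ideal add opp G I. Proof. by case: Hmin. Qed.

Lemma IG z : z \in I -> z \in G. Proof. exact: (idealG HI). Qed.

Lemma diffI x y : add (s x) (opp (s y)) \in I.
Proof.
pose R := fun x y => add (s x) (opp (s y)) \in I.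
case: (@quot_dich X (fun x y => s x y) (fun x y => g x y) R Hsimp).
- move=> z; exact: (cong_refl HB HI (sG z)).
- move=> a b; exact: (cong_sym HB HI (sG a) (sG b)).
- move=> a b c; exact: (cong_trans HB HI (sG a) (sG b) (sG c)).
- move=> a a' b b' h1 h2; rewrite /R -!Hlam.
  exact: (cong_lam HB HI (sG a) (sG a') (sG b) (sG b') h1 h2).
- move=> a a' b b' h1 h2.
  have e1 := sg_inv b a; have e2 := sg_inv b' a'.
  have hc : cong add opp I (s (s b a)) (s (s b' a')).
    rewrite -!Hlam; exact: (cong_lam HB HI (sG b) (sG b') (sG a) (sG a') h2 h1).
  have k1 : cong add opp I (lam (s (s b a)) (s (g a b))) (lam (s (s b' a')) (s (g a' b'))).
    by rewrite !lam_s ?sG // e1 e2; exact: h2.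
  have k2 : cong add opp I (lam (s (s b' a')) (s (g a' b'))) (lam (s (s b a)) (s (g a' b'))).
    apply: (cong_laml HB HI); try bm.
    exact: (cong_sym HB HI (sG _) (sG _) hc).
  apply: (cong_lam_cancel HB HI (sG (s b a))); try bm.
  exact: (cong_trans HB HI (lamG HB (sG _) (sG _)) (lamG HB (sG _) (sG _)) (lamG HB (sG _) (sG _)) k1 k2).
- move=> h; exfalso.
  case: Hmin => _ [hne _].
  have [j hj jn1] : exists2 j, j \in I & j != 1.
    case: (pickP [pred j in I | j != 1]) => [j /andP [hj hjn]|none].
      by exists j.
    move: hne; rewrite eqEsubset sub1set (ideal1 HI) andbT.
    case/negP; apply/subsetP => j hj; rewrite inE.
    by have := none j; rewrite /= hj /= => /negbFE.
  case: (pickP (fun x => j x != x)) => [x1 hx|none].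
    move/eqP: hx; apply; apply: h.
    rewrite /R -lam_s; last exact: IG.
    exact: (lam_j_cong HB HI hj (sG x1)).
  move/eqP: jn1; apply; apply/permP => x1; rewrite perm1.
  by have := none x1; move/negbFE/eqP.
- by move=> h; apply: h.
Qed.

Lemma stars_in (L : {set {perm X}}) : L \subset G -> (1 : {perm X}) \in L ->
  {in L &, forall a b, add a b \in L} -> {in L, forall a, opp a \in L} ->
  (forall x y, add (s x) (opp (s y)) \in L) ->
  {in G &, forall a b, star a b \in L}.
Proof.
move=> sLG h1 hadd hopp hd.
pose T := [set b in G | [forall a, (a \in G) ==> (star a b \in L)]].
have gs : group_set T.
  apply/andP; split.
    rewrite inE group1 /=; apply/forallP => a; apply/implyP => ha.
    rewrite /bstar (lam1 HB) // (opp1 HB) (add1 HB) //; bm.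
  apply/subsetP => _ /mulsgP [b c hb hc ->].
  move: hb hc; rewrite !inE => /andP [hb /forallP fb] /andP [hc /forallP fc].
  rewrite groupM //=; apply/forallP => a; apply/implyP => ha.
  have {}ha : a \in G := ha.
  have -> : b * c = bcomp c b by [].
  have fb' x : x \in G -> star x b \in L by move=> hx; move: (fb x); rewrite hx.
  have fc' x : x \in G -> star x c \in L by move=> hx; move: (fc x); rewrite hx.
  rewrite (starM HB) //; apply: (hadd); [apply: (hadd) | apply: (hopp)].
  - exact: fc'.
  - by apply: fb'; exact: (bcompG ha hc).
  - exact: fb'.
have sGT : G \subset T.
  apply: gen_ind => // y; rewrite inE sG /=; apply/forallP => a; apply/implyP => ha.
  by rewrite /bstar lam_s.
move=> a b ha hb; have := subsetP sGT b hb; rewrite inE => /andP [_ /forallP /(_ a) /implyP].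
by apply.
Qed.

Lemma starI a b : a \in G -> b \in G -> star a b \in I.
Proof.
apply: stars_in.
- by case: HI => _ [/andP [h _] _].
- exact: (ideal1 HI).
- move=> u v; exact: (ideal_add HB HI).
- move=> u; exact: (ideal_opp HB HI).
- exact: diffI.
Qed.

Lemma cong_add a a' b b' : a \in G -> a' \in G -> b \in G -> b' \in G ->
  cong add opp I a a' -> cong add opp I b b' -> cong add opp I (add a b) (add a' b').
Proof.
move=> ha ha' hb hb' h1 h2; rewrite /cong (oppD HB); try bm.
rewrite (addACA HB); try bm. exact: (ideal_add HB HI h1 h2).
Qed.

Lemma comp_cong a b : a \in G -> b \in G -> cong add opp I (bcomp a b) (add a b).
Proof.
move=> ha hb; rewrite /cong (compE HB) //; rewrite (oppD HB) //.
rewrite (addACA HB); try bm. rewrite (addaN HB) // (add1 HB); try bm.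
exact: starI.
Qed.

Lemma span1 (S : {set {perm X}}) : in_add_span add opp S 1.
Proof. by move=> A h1. Qed.
Lemma span_add (S : {set {perm X}}) u v : in_add_span add opp S u ->
  in_add_span add opp S v -> in_add_span add opp S (add u v).
Proof. by move=> hu hv A h1 ha ho hS; apply: (ha); [exact: (hu A h1 ha ho hS) | exact: (hv A h1 ha ho hS)]. Qed.
Lemma span_opp (S : {set {perm X}}) u : in_add_span add opp S u ->
  in_add_span add opp S (opp u).
Proof. by move=> hu A h1 ha ho hS; apply: (ho); exact: (hu A h1 ha ho hS). Qed.
Lemma span_sub (S : {set {perm X}}) u : u \in S -> in_add_span add opp S u.
Proof. by move=> hu A h1 ha ho hS; apply: (subsetP hS). Qed.

Lemma span_eq (S : {set {perm X}}) : S \subset I ->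
  (forall c z, c \in G -> z \in S -> in_add_span add opp S (lam c z)) ->
  (forall a b, a \in G -> b \in G -> in_add_span add opp S (star a b)) ->
  (exists2 z, z \in S & z != 1) ->
  forall z, z \in I <-> in_add_span add opp S z.
Proof.
move=> sSI hl hst [z0 hz0 nz0].
have sSG : S \subset G by apply/subsetP => z hz; apply: IG; apply: (subsetP sSI).
have spG z : in_add_span add opp S z -> z \in G.
  move=> h; apply: h => //.
  - move=> u v; exact: (addG HB).
  - move=> u; exact: (oppG HB).
pose K := [set z in G | pdec (in_add_span add opp S z)].
have inK z : z \in K <-> in_add_span add opp S z.
  rewrite inE; split => [/andP [_ /pdecP] //|h].
  by rewrite spG //=; apply/pdecP.
have HK : is_ideal add opp G K.
  apply: (span_ideal HB).
  - by apply/subsetP => z /inK; apply: spG.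
  - by apply/inK; apply: span1.
  - by move=> u v /inK hu /inK hv; apply/inK; apply: span_add.
  - by move=> u /inK hu; apply/inK; apply: span_opp.
  - move=> c z hc /inK hz; apply/inK.
    pose A := [set w in G | pdec (in_add_span add opp S (lam c w))].
    have hA w : w \in A <-> in_add_span add opp S (lam c w) /\ w \in G.
      rewrite inE; split => [/andP [h /pdecP] //|[h1 h2]].
      by rewrite h2; apply/pdecP.
    have : z \in A.
      apply: hz.
      - by apply/hA; rewrite (lam1 HB) //; split; [apply: span1 | bm].
      - move=> u v /hA [hu hu'] /hA [hv hv']; apply/hA; split; last bm.
        by rewrite (lamD HB) //; apply: span_add.
      - move=> u /hA [hu hu']; apply/hA; split; last bm.
        by rewrite (lamN HB) //; apply: span_opp.
      - by apply/subsetP => w hw; apply/hA; split; [apply: hl | apply: (subsetP sSG)].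
    by case/hA.
  - by move=> a b ha hb; apply/inK; apply: hst.
have sKI : K \subset I.
  apply/subsetP => z /inK h; apply: h.
  - exact: (ideal1 HI).
  - move=> u v; exact: (ideal_add HB HI).
  - move=> u; exact: (ideal_opp HB HI).
  - exact: sSI.
have Kne : K != [1 {perm X}].
  apply/negP => /eqP eK.
  have : z0 \in K by apply/inK; apply: span_sub.
  by rewrite eK inE (negbTE nz0).
case: Hmin => _ [_ Hm].
case: (Hm K HK sKI) => eK; first by move: Kne; rewrite eK eqxx.
by move=> z; rewrite -eK; apply: inK.
Qed.


Lemma lam_star c a b : c \in G -> a \in G -> b \in G ->
  lam c (star a b) = add (star (bcomp c a) b) (opp (star c b)).
Proof.
move=> hc ha hb.
rewrite /bstar (lamD HB); try bm. rewrite (lamN HB); try bm. rewrite (lamM HB); try bm.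
rewrite (oppD HB); try bm. rewrite (oppK HB); try bm. rewrite (addACA HB); try bm.
rewrite (addNa HB); try bm. by rewrite (addr1 HB); try bm.
Qed.

Lemma two_elems : exists x1 x2 : X, x1 != x2.
Proof.
case: Hsimp => _ [H1 _]; case/card_gt1P: H1 => x1 [x2 [_ _ n12]].
by exists x1, x2.
Qed.

Lemma nontriv_s : exists x y, s x y != y.
Proof.
have [x1 [x2 n12]] := two_elems.
have [x hx] : exists x, s x != 1.
  case: (eqVneq (s x1) 1) => e1; last by exists x1.
  case: (eqVneq (s x2) 1) => e2; last by exists x2.
  by move/eqP: n12; case; apply: s_inj; rewrite e1 e2.
case: (pickP (fun y => s x y != y)) => [y hy|none]; first by exists x, y.
move/eqP: hx; case; apply/permP => y; rewrite perm1.
by have := none y; move/negbFE/eqP.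
Qed.

Lemma main_concl :
  [/\ {in permGroup s &, forall a b, (I :* bcomp a b)%g = (I :* add a b)%g},
      (exists2 c, c \in permGroup s & {in permGroup s, forall a, exists n : nat,
          (I :* a)%g = (I :* bnmul add n c)%g \/ (I :* a)%g = (I :* opp (bnmul add n c))%g}),
      (forall z, z \in I <-> in_add_span add opp
         [set bstar add opp a b | a in permGroup s, b in permGroup s] z),
      (forall z, z \in I <-> in_add_span add opp
         [set add (s x) (opp (s y)) | x : X, y : X] z)
    & (forall a, a \in permGroup s ->
         {in permGroup s, forall b, bcomp a b = add a b} -> a = 1%g)].
Proof.
split.
- move=> a b ha hb; apply: (cong_coset HB HI); try bm.
  exact: comp_cong.
- have [x0] : inhabited X by case: Hsimp => [[h _] _].
  set c := s x0.
  have hcG : c \in G by apply: sG.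
  have bnG n : bnmul add n c \in G.
    elim: n => [|n IH]; first exact: group1.
    by rewrite /bnmul iterS -/(bnmul add n c); bm.
  have bnD n m : bnmul add (n + m) c = add (bnmul add n c) (bnmul add m c).
    elim: n => [|n IH].
      by rewrite add0n {2}/bnmul /= (add1 HB).
    rewrite addSn /bnmul !iterS -!/(bnmul add _ c) IH.
    by rewrite (addA HB).
  pose T := [set a in G | pdec (exists n, cong add opp I a (bnmul add n c))].
  have inT a : a \in T <-> a \in G /\ exists n, cong add opp I a (bnmul add n c).
    rewrite inE; split => [/andP [h /pdecP] //|[h1 h2]].
    by rewrite h1; apply/pdecP.
  have gs : group_set T.
    apply/andP; split.
      apply/inT; split; first exact: group1.
      by exists 0; apply: (cong_refl HB HI); bm.
    apply/subsetP => _ /mulsgP [j k /inT [hj [n hn]] /inT [hk [m hm]] ->].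
    apply/inT; split; first by rewrite groupM.
    exists (m + n); have -> : j * k = bcomp k j by [].
    apply: (cong_trans HB HI _ _ _ (comp_cong hk hj)); try bm.
    by rewrite bnD; apply: cong_add.
  have sGT : G \subset T.
    apply: gen_ind => // y; apply/inT; split; first exact: sG.
    exists 1%N; rewrite /bnmul /= (addr1 HB) //; exact: diffI.
  exists c => // a ha.
  have [_ [n hn]] := (inT a).1 (subsetP sGT a ha).
  by exists n; left; apply: (cong_coset HB HI).
- move=> z; apply: span_eq.
  + by apply/subsetP => _ /imset2P [a b ha hb ->]; apply: starI.
  + move=> c _ hc /imset2P [a b ha hb ->].
    rewrite lam_star //; apply: span_add; first apply: span_sub.
      by apply: imset2_f => //; bm.
    by apply: span_opp; apply: span_sub; apply: imset2_f.
  + by move=> a b ha hb; apply: span_sub; apply: imset2_f.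
  + have [x [y hxy]] := nontriv_s.
    exists (star (s x) (s y)); first by apply: imset2_f; apply: sG.
    rewrite /bstar Hlam; apply/eqP => e.
    move/eqP: hxy; apply; apply: s_inj.
    by apply: (subr1 HB) e; apply: sG.
- move=> z; apply: span_eq.
  + by apply/subsetP => _ /imset2P [x y _ _ ->]; apply: diffI.
  + move=> c _ hc /imset2P [x y _ _ ->].
    rewrite (lamD HB); try bm. rewrite (lamN HB); try bm. rewrite !lam_s //.
    by apply: span_sub; apply: imset2_f.
  + pose S2 := [set add (s x) (opp (s y)) | x : X, y : X].
    pose L := [set z in G | pdec (in_add_span add opp S2 z)].
    have spG z' : in_add_span add opp S2 z' -> z' \in G.
      move=> h; apply: h.
      - exact: group1.
      - move=> u v; exact: addGm.
      - move=> u; exact: oppGm.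
      - by apply/subsetP => _ /imset2P [x y _ _ ->]; bm.
    have inL z' : z' \in L <-> in_add_span add opp S2 z'.
      rewrite inE; split => [/andP [_ /pdecP] //|h].
      by rewrite spG //=; apply/pdecP.
    move=> a b ha hb; apply/inL; apply: stars_in => //.
    * by apply/subsetP => z' /inL; apply: spG.
    * by apply/inL; apply: span1.
    * by move=> u v /inL hu /inL hv; apply/inL; apply: span_add.
    * by move=> u /inL hu; apply/inL; apply: span_opp.
    * by move=> x y; apply/inL; apply: span_sub; apply: imset2_f.
  + have [x1 [x2 n12]] := two_elems.
    exists (add (s x1) (opp (s x2))); first by apply: imset2_f.
    apply/eqP => e; move/eqP: n12; apply; apply: s_inj.
    by apply: (subr1 HB) e; apply: sG.
- move=> a ha h; apply/permP => x; rewrite perm1; apply: s_inj.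
  rewrite -lam_s // /blambda h ?sG //.
  by rewrite (addKl HB); try bm.
Qed.

End Main.

Close Scope group_scope.

Theorem mainTheorem3 (X : finType) (s g : X -> {perm X})
    (add : {perm X} -> {perm X} -> {perm X}) (opp : {perm X} -> {perm X})
    (I : {set {perm X}}) :
  simple_solution (fun x y => s x y) (fun x y => g x y) ->
  ~~ prime #|X| ->
  natural_brace s add opp ->
  minimal_nonzero_ideal add opp (permGroup s) I ->
  [/\ (* G/I is a trivial left brace *)
      {in permGroup s &, forall a b, (I :* bcomp a b)%g = (I :* add a b)%g},
      (* the additive group of G/I is cyclic *)
      (exists2 c, c \in permGroup s & {in permGroup s, forall a, exists n : nat,
          (I :* a)%g = (I :* bnmul add n c)%g \/ (I :* a)%g = (I :* opp (bnmul add n c))%g}),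
      (* I = G^2 *)
      (forall z, z \in I <-> in_add_span add opp
         [set bstar add opp a b | a in permGroup s, b in permGroup s] z),
      (* I = < sigma_x - sigma_y | x, y in X >_+ *)
      (forall z, z \in I <-> in_add_span add opp
         [set add (s x) (opp (s y)) | x : X, y : X] z)
    & (* soc(G) = {0} *)
      (forall a, a \in permGroup s ->
         {in permGroup s, forall b, bcomp a b = add a b} -> a = 1%g)].
Proof.
move=> H1 H2 H3 H4; exact: (main_concl H1 H3 H2 H4).
Qed.
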